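(* Let $\Delta$ be a finite tree, $\mathbb{G}=\mathbb{G}(\Delta)$, $K\le\mathbb{G}$ a finite index subgroup, $v$ a vertex of $\Psi(K)$ and $w$ a vertex of $\widetilde{\Delta}^e$ with $\gamma_K(w)=v$. Then (1) there is a bijection between the vertices of $\Psi(K)$ adjacent to $v$ and the classes of vertices of $\widetilde{\Delta}^e$ adjacent to $w$ modulo conjugation by elements of $K$; (2) there is a bijection between the edges of $\Psi(K)$ incident to $v$ and the classes of vertices of $\widetilde{\Delta}^e$ adjacent to $w$ modulo conjugation by elements of $C_K(w)=K\cap C_{\mathbb{G}}(w)$.
   Context: $\mathbb{G}(\Delta)$ is the right-angled Artin group with generators the vertices of $\Delta$ (canonical generators) and relations $[u,v]=1$ for each edge of $\Delta$. Conjugation: $g^h=hgh^{-1}$. The reduced extension graph $\widetilde{\Delta}^e$ has as vertices the elements of $\mathbb{G}$ conjugate to canonical generators corresponding to vertices of $\Delta$ of degree greater than 1, two vertices being adjacent iff they commute; $\mathbb{G}$ (hence $K$) acts on it by conjugation. $\Psi(K)=K\backslash\widetilde{\Delta}^e$ is the quotient graph (it may have multiple edges), and $\gamma_K:\widetilde{\Delta}^e\to\Psi(K)$ the quotient map. *)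

(* Defs.v *)
From HB Require Import structures.
From mathcomp Require Import all_boot.
From mathcomp Require Import monoid fingraph.

Set Implicit Arguments.
Unset Strict Implicit.
Unset Printing Implicit Defensive.

Local Open Scope group_scope.

Definition is_finite_tree (T : finType) (e : rel T) : Prop :=
  [/\ symmetric e, irreflexive e,
      (forall x y : T, connect e x y) &
      (forall s : seq T, uniq s -> 3 <= size s -> ~~ cycle e s)].

Definition degree (T : finType) (e : rel T) (t : T) : nat :=
  #|[pred u | e t u]|.

(* (G, iota) is the right-angled Artin group G(Delta) with canonical
   generators iota t: the relations [iota u, iota v] = 1 hold for every edge
   u v of Delta, and (G, iota) is universal for this property, i.e. G is the
   group given by the presentation < T | [u,v] = 1 for uv an edge >. *)
Definition is_RAAG (T : finType) (e : rel T) (G : groupType) (iota : T -> G)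
  : Prop :=
  (forall u v, e u v -> iota u * iota v = iota v * iota u) /\
  (forall (H : groupType) (f : T -> H),
     (forall u v, e u v -> f u * f v = f v * f u) ->
     exists phi : G -> H,
       [/\ {morph phi : x y / x * y},
           (forall t, phi (iota t) = f t) &
           (forall psi : G -> H, {morph psi : x y / x * y} ->
              (forall t, psi (iota t) = f t) -> forall x, psi x = phi x)]).

(* conjugation with the paper's convention g^h = h g h^{-1} *)
Definition conjP (G : groupType) (h g : G) : G := h * g * h^-1.

Definition is_subgroup (G : groupType) (K : G -> Prop) : Prop :=
  [/\ K 1, (forall x y, K x -> K y -> K (x * y)) & (forall x, K x -> K x^-1)].

Definition finite_index (G : groupType) (K : G -> Prop) : Prop :=
  exists s : seq G, forall g : G, exists2 r, r \in s & K (r^-1 * g).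

Definition centK (G : groupType) (K : G -> Prop) (w : G) : G -> Prop :=
  fun k => K k /\ k * w = w * k.

Definition redExtVertex (T : finType) (e : rel T) (G : groupType)
  (iota : T -> G) (x : G) : Prop :=
  exists (g : G) (t : T), 1 < degree e t /\ x = conjP g (iota t).

Definition redExtAdj (T : finType) (e : rel T) (G : groupType)
  (iota : T -> G) (x y : G) : Prop :=
  [/\ redExtVertex e iota x, redExtVertex e iota y, x <> y & x * y = y * x].

Definition conjRel (G : groupType) (K : G -> Prop) (x y : G) : Prop :=
  exists k, K k /\ y = conjP k x.

Definition gammaK (G : groupType) (K : G -> Prop) (x : G) : G -> Prop :=
  fun y => conjRel K x y.

Definition PsiVertex (T : finType) (e : rel T) (G : groupType)
  (iota : T -> G) (K : G -> Prop) (O : G -> Prop) : Prop :=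
  exists x, redExtVertex e iota x /\ O = gammaK K x.

Definition upair (G : Type) (x y : G) : G -> Prop := fun z => z = x \/ z = y.

(* K-orbit of the edge {x, y}: an edge of Psi(K) (multiple edges allowed) *)
Definition edgeOrbit (G : groupType) (K : G -> Prop) (x y : G)
  : (G -> Prop) -> Prop :=
  fun P => exists k, K k /\ P = upair (conjP k x) (conjP k y).

Definition PsiEdge (T : finType) (e : rel T) (G : groupType)
  (iota : T -> G) (K : G -> Prop) (E : (G -> Prop) -> Prop) : Prop :=
  exists x y, redExtAdj e iota x y /\ E = edgeOrbit K x y.

Definition PsiIncident (T : finType) (e : rel T) (G : groupType)
  (iota : T -> G) (K : G -> Prop) (O : G -> Prop)
  (E : (G -> Prop) -> Prop) : Prop :=
  PsiEdge e iota K E /\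
  exists P, E P /\ exists z, P z /\ gammaK K z = O.

Definition PsiAdj (T : finType) (e : rel T) (G : groupType)
  (iota : T -> G) (K : G -> Prop) (O O' : G -> Prop) : Prop :=
  exists x y, [/\ redExtAdj e iota x y, gammaK K x = O & gammaK K y = O'].

Definition classesOn (X : Type) (A : X -> Prop) (R : X -> X -> Prop)
  : (X -> Prop) -> Prop :=
  fun C => exists a, A a /\ C = (fun b => A b /\ R a b).

Definition bijection_between (X Y : Type) (A : X -> Prop) (B : Y -> Prop)
  : Prop :=
  exists f : X -> Y,
    [/\ (forall a, A a -> B (f a)),
        (forall a a', A a -> A a' -> f a = f a' -> a = a') &
        (forall b, B b -> exists2 a, A a & f a = b)].

(* Main.v *)
Require Import Defs.
From HB Require Import structures.
From mathcomp Require Import all_boot.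
From mathcomp Require Import monoid fingraph zify.
Set Implicit Arguments.
Unset Strict Implicit.
Unset Printing Implicit Defensive.

Section FreeWords.
Variable X : eqType.
Definition letter := (X * bool)%type.
Definition linv (a : letter) : letter := (a.1, ~~ a.2).
Lemma linvK : involutive linv. Proof. by case=> x b; rewrite /linv /= negbK. Qed.
Definition lrel (a b : letter) := b != linv a.
Definition reduced (w : seq letter) := sorted lrel w.
Definition act (a : letter) (w : seq letter) :=
  if w is b :: w' then (if b == linv a then w' else a :: w) else [:: a].
Definition fmul (u v : seq letter) := foldr act v u.
Definition finv (u : seq letter) := rev (map linv u).

Lemma reduced_tail a w : reduced (a :: w) -> reduced w.
Proof. by rewrite /reduced /=; apply: path_sorted. Qed.

Lemma act_reduced a w : reduced w -> reduced (act a w).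
Proof.
case: w => [|b w] //= Hw; case: ifP => Hb; first exact: reduced_tail Hw.
by rewrite /reduced /= /lrel Hb.
Qed.

Lemma act_inv a w : reduced w -> act (linv a) (act a w) = w.
Proof.
case: w => [|b w] /=; first by rewrite linvK eqxx.
case: ifP => Hb.
  move/eqP: Hb => -> /=; case: w => [|c w] //= /andP [Hc _].
  by rewrite (negbTE Hc).
by rewrite /= linvK eqxx.
Qed.

Lemma act_invV a w : reduced w -> act a (act (linv a) w) = w.
Proof. by move=> H; rewrite -{1}(linvK a) act_inv. Qed.

Lemma fmul_reduced u v : reduced v -> reduced (fmul u v).
Proof. by elim: u => [|a u IH] //= Hv; apply: act_reduced; apply: IH. Qed.

Lemma fmul_act a u v : reduced v -> fmul (act a u) v = act a (fmul u v).
Proof.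
move=> Hv; case: u => [|b u] //=; case: ifP => // /eqP ->.
by rewrite act_invV // fmul_reduced.
Qed.

Lemma fmulA u v w : reduced v -> reduced w ->
  fmul (fmul u v) w = fmul u (fmul v w).
Proof.
move=> Hv Hw; elim: u => [|a u IH] //=.
by rewrite fmul_act // IH.
Qed.

Lemma act_cons c s : reduced (c :: s) -> act c s = c :: s.
Proof. by case: s => [|d s] //= /andP [H _]; rewrite (negbTE H). Qed.

Lemma fmulw1 u : reduced u -> fmul u [::] = u.
Proof.
elim: u => [|a u IH] //= Hu; rewrite IH ?act_cons //; exact: reduced_tail Hu.
Qed.

Lemma fmul_cat u v : reduced (u ++ v) -> fmul u v = u ++ v.
Proof.
elim: u => [|a u IH] //= Hu; rewrite IH ?act_cons //; exact: reduced_tail Hu.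
Qed.

Lemma finv_cons a u : finv (a :: u) = rcons (finv u) (linv a).
Proof. by rewrite /finv /= rev_cons. Qed.

Lemma finvK : involutive finv.
Proof. by move=> u; rewrite /finv map_rev revK mapK //; exact: linvK. Qed.

Lemma finv_reduced u : reduced u -> reduced (finv u).
Proof.
rewrite /reduced /finv rev_sorted sorted_map => H.
apply: sub_sorted H => a b; rewrite /lrel /relpre /=.
move=> H1; rewrite linvK; apply: contra H1 => /eqP <-; exact: eqxx.
Qed.

Lemma fmulVw u : reduced u -> fmul (finv u) u = [::].
Proof.
elim: u => [|a u IH] //= Hu; rewrite finv_cons /fmul foldr_rcons /=.
by rewrite linvK eqxx; apply: IH; exact: reduced_tail Hu.
Qed.

Lemma fmulwV u : reduced u -> fmul u (finv u) = [::].
Proof.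
move=> Hu; have := fmulVw (finv_reduced Hu); by rewrite finvK.
Qed.

Variable f : X -> X.
Hypothesis finj : injective f.
Definition rl (a : letter) : letter := (f a.1, a.2).
Lemma rl_linv a : rl (linv a) = linv (rl a). Proof. by []. Qed.
Lemma rl_eq a b : (rl a == rl b) = (a == b).
Proof.
case: a b => x b [y c]; rewrite /rl /= !xpair_eqE.
by rewrite (inj_eq finj).
Qed.
Lemma map_act a w : map rl (act a w) = act (rl a) (map rl w).
Proof.
case: w => [|b w] //=; rewrite -rl_linv rl_eq; by case: ifP.
Qed.
Lemma map_fmul u v : map rl (fmul u v) = fmul (map rl u) (map rl v).
Proof. by elim: u => [|a u IH] //=; rewrite map_act IH. Qed.
Lemma map_reduced w : reduced w -> reduced (map rl w).
Proof.
rewrite /reduced sorted_map; apply: sub_sorted => a b.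
by rewrite /lrel /relpre /= -rl_linv rl_eq.
Qed.
Lemma map_finv u : map rl (finv u) = finv (map rl u).
Proof. by rewrite /finv map_rev -!map_comp. Qed.
End FreeWords.

Section Comm.
Variable X : eqType.
Lemma rot_all (a : letter X) s : a :: s = rcons s a -> all (pred1 a) s.
Proof.
elim: s => [|x s IH] //= [Ha E]; subst x; rewrite eqxx /=; apply: IH; by rewrite E.
Qed.

Lemma reduced_rcons (s : seq (letter X)) b a :
  reduced (rcons s b) -> a != linv b -> reduced (rcons (rcons s b) a).
Proof.
case: s => [|c s] /=; first by rewrite /reduced /= /lrel => _ ->.
rewrite /reduced /= !rcons_path => /andP [-> ->] Hab /=.
by rewrite last_rcons.
Qed.

Lemma reduced_belast (s : seq (letter X)) b : reduced (rcons s b) -> reduced s.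
Proof.
case: s => [|c s] //=; rewrite /reduced /= rcons_path; by case/andP.
Qed.

Lemma comm_single (w : seq (letter X)) a : reduced w ->
  fmul w [:: a] = act a w -> all (pred1 a) w || all (pred1 (linv a)) w.
Proof.
case/lastP: w => [|s b] // Hw.
have HL : fmul (rcons s b) [:: a] =
          if a == linv b then s else rcons (rcons s b) a.
  rewrite /fmul foldr_rcons /=; case: ifP => Hab.
    exact: (fmulw1 (reduced_belast Hw)).
  change (fmul s [:: b; a] = rcons (rcons s b) a).
  have Ecat : s ++ [:: b; a] = rcons (rcons s b) a by rewrite -!cats1 -catA.
  rewrite fmul_cat Ecat //; apply: reduced_rcons => //; by rewrite Hab.
have [c [w' E]] : exists c w', rcons s b = c :: w'.
  by case: (s) => [|d s']; [exists b, [::] | exists d, (rcons s' b)].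
have -> : act a (rcons s b) = act a (c :: w') by rewrite E.
rewrite HL /=.
have Hsz : size (rcons s b) = (size w').+1 by rewrite E.
case: ifP => Hab; case: ifP => Hca.
- move=> Es; subst s; move/eqP: Hca => Hca; move/eqP: Hab => Hab.
  have Hb : b = linv a by rewrite Hab linvK.
  apply/orP; right; rewrite E /= Hca eqxx /=.
  have E' : c :: w' = rcons w' c by rewrite -E Hca Hb.
  by have := rot_all E'; rewrite Hca.
- move=> Es; have := congr1 size Es; have := congr1 size E.
  rewrite /= !size_rcons => ? ?; lia.
- move=> Es; have := congr1 size Es; have := congr1 size E.
  rewrite /= !size_rcons => ? ?; lia.
- move=> Es; apply/orP; left.
  move: Es; rewrite E /= => Es.
  exact: (rot_all (esym Es)).
Qed.
End Comm.

From Stdlib Require Import ZArith Lia.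
Local Open Scope group_scope.

Section GroupWords.
Variable G : groupType.
Definition psil (a : letter G) : G := if a.2 then a.1 else a.1^-1.
Definition psi (w : seq (letter G)) : G := foldr (fun a g => psil a * g) 1 w.

Lemma psil_inv a : psil a * psil (linv a) = 1.
Proof. by case: a => x [] /=; rewrite /psil /= ?mulgV ?mulVg. Qed.

Lemma psi_act a w : psi (act a w) = psil a * psi w.
Proof.
case: w => [|b w] //=; case: ifP => // /eqP ->.
by rewrite mulgA psil_inv mul1g.
Qed.

Lemma psi_fmul u v : psi (fmul u v) = psi u * psi v.
Proof. by elim: u => [|a u IH] /=; rewrite ?mul1g // psi_act IH mulgA. Qed.

Definition cj (c : G) (y : G) : G := c * y * c^-1.
Lemma cj_inj c : injective (cj c).
Proof. by move=> x y; rewrite /cj => /mulIg /mulgI. Qed.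
Lemma cjM c d y : cj c (cj d y) = cj (c * d) y.
Proof. by rewrite /cj invgM !mulgA. Qed.
Lemma cj1 y : cj 1 y = y.
Proof. by rewrite /cj invg1 mulg1 mul1g. Qed.

Lemma psi_map c w : psi (map (rl (cj c)) w) = cj c (psi w).
Proof.
rewrite /cj; elim: w => [|a w IH] /=; first by rewrite mulg1 mulgV.
rewrite IH /psil /=; case: (a.2); rewrite /cj !mulgA.
  by rewrite mulgVK.
by rewrite !invgM invgK !mulgA mulgVK.
Qed.

Lemma map_cj1 (w : seq (letter G)) : map (rl (cj 1)) w = w.
Proof. by elim: w => [|[x b] w IH] //=; rewrite IH /rl /= cj1. Qed.

Lemma map_cjM c d (w : seq (letter G)) :
  map (rl (cj c)) (map (rl (cj d)) w) = map (rl (cj (c * d))) w.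
Proof. by elim: w => [|[x b] w IH] //=; rewrite IH /rl /= cjM. Qed.

Definition sgl (a : letter G) : Z := if a.2 then 1%Z else (-1)%Z.
Definition sg (w : seq (letter G)) : Z := foldr (fun a z => (sgl a + z)%Z) 0%Z w.
Lemma sg_act a w : sg (act a w) = (sgl a + sg w)%Z.
Proof.
case: w => [|b w]; first by [].
rewrite /act; case: ifP => [/eqP ->|_]; last by [].
change (sg w = (sgl a + (sgl (linv a) + sg w))%Z).
case: a => x []; rewrite /sgl /linv; cbn [fst snd negb]; lia.
Qed.
Lemma sg_fmul u v : sg (fmul u v) = (sg u + sg v)%Z.
Proof. elim: u => [|a u IH] //=; rewrite sg_act IH; lia. Qed.
Lemma sg_map c w : sg (map (rl (cj c)) w) = sg w.
Proof. by elim: w => [|a w IH] //=; rewrite IH. Qed.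
End GroupWords.

Record endo (G : groupType) := Endo { qf : G -> G; qfM : {morph qf : x y / x * y} }.

Lemma morph1 (G H : groupType) (f : G -> H) : {morph f : x y / x * y} -> f 1 = 1.
Proof.
move=> fM; apply: (mulgI (f 1)); by rewrite -fM !mulg1.
Qed.
Lemma morphV (G H : groupType) (f : G -> H) : {morph f : x y / x * y} ->
  forall x, f x^-1 = (f x)^-1.
Proof.
move=> fM x; apply: (mulgI (f x)); by rewrite -fM !mulgV (morph1 fM).
Qed.

Definition FW (G : groupType) := {w : seq (letter G) | reduced w}.
Definition SD (G : groupType) (Q : endo G) := (FW G * G)%type.
HB.instance Definition _ (G : groupType) (Q : endo G) := Choice.on (SD Q).

Section SDgroup.
Variables (G : groupType) (Q : endo G).
Local Notation q := (qf Q).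
Definition RR (g : G) (w : seq (letter G)) := map (rl (cj (q g))) w.
Lemma RR_reduced g w : reduced w -> reduced (RR g w).
Proof. move=> H; apply: (map_reduced (@cj_inj G (q g)) H). Qed.
Lemma RR_fmul g u v : RR g (fmul u v) = fmul (RR g u) (RR g v).
Proof. exact: (map_fmul (@cj_inj G (q g))). Qed.
Lemma RR_finv g u : RR g (finv u) = finv (RR g u).
Proof. exact: map_finv. Qed.
Lemma RRM g h w : RR g (RR h w) = RR (g * h) w.
Proof. by rewrite /RR map_cjM qfM. Qed.
Lemma RR1 w : RR 1 w = w.
Proof. by rewrite /RR (morph1 (@qfM _ Q)) map_cj1. Qed.

Definition sdmul (p1 p2 : SD Q) : SD Q :=
  (exist _ (fmul (val p1.1) (RR p1.2 (val p2.1)))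
     (fmul_reduced _ (RR_reduced _ (valP p2.1))), p1.2 * p2.2).
Definition sdone : SD Q := (exist _ [::] isT, 1).
Definition sdinv (p : SD Q) : SD Q :=
  (exist _ (RR p.2^-1 (finv (val p.1)))
     (RR_reduced _ (finv_reduced (valP p.1))), p.2^-1).

Lemma sdmulA : associative sdmul.
Proof.
move=> [[u1 H1] g1] [[u2 H2] g2] [[u3 H3] g3]; rewrite /sdmul /=.
congr (_, _); last by rewrite mulgA.
apply: val_inj => /=.
rewrite RR_fmul RRM fmulA //; [exact: RR_reduced | exact: RR_reduced].
Qed.
Lemma sdmul1g : left_id sdone sdmul.
Proof.
move=> [[u H] g]; rewrite /sdmul /=; congr (_, _); last by rewrite mul1g.
by apply: val_inj => /=; rewrite RR1.
Qed.
Lemma sdmulg1 : right_id sdone sdmul.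
Proof.
move=> [[u H] g]; rewrite /sdmul /=; congr (_, _); last by rewrite mulg1.
by apply: val_inj => /=; rewrite fmulw1.
Qed.
Lemma sdmulVg : left_inverse sdone sdinv sdmul.
Proof.
move=> [[u H] g]; rewrite /sdmul /=; congr (_, _); last by rewrite mulVg.
by apply: val_inj => /=; rewrite -RR_fmul fmulVw.
Qed.
Lemma sdmulgV : right_inverse sdone sdinv sdmul.
Proof.
move=> [[u H] g]; rewrite /sdmul /=; congr (_, _); last by rewrite mulgV.
by apply: val_inj => /=; rewrite RRM mulgV RR1 fmulwV.
Qed.
End SDgroup.

HB.instance Definition _ (G : groupType) (Q : endo G) :=
  isGroup.Build (SD Q) (@sdmulA G Q) (@sdmul1g G Q) (@sdmulg1 G Q)
    (@sdmulVg G Q) (@sdmulgV G Q).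

Lemma raag_uniq (T : finType) (e : rel T) (G : groupType) (iota : T -> G)
  (hG : is_RAAG e iota) (H : groupType) (p1 p2 : G -> H) :
  {morph p1 : x y / x * y} -> {morph p2 : x y / x * y} ->
  (forall t, p1 (iota t) = p2 (iota t)) -> forall x, p1 x = p2 x.
Proof.
move=> M1 M2 E x.
have rel : forall u v, e u v -> p1 (iota u) * p1 (iota v) = p1 (iota v) * p1 (iota u).
  by move=> u v euv; rewrite -!M1 hG.1.
have [phi [_ _ U]] := hG.2 H (fun u => p1 (iota u)) rel.
by rewrite (U p1 M1 (fun _ => erefl)) (U p2 M2 (fun t => esym (E t))).
Qed.

Lemma sg_all (G : groupType) (a : letter G) w :
  all (pred1 a) w -> sg w = (Z.of_nat (size w) * sgl a)%Z.
Proof.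
elim: w => [|b w IH] Hall; first by [].
move: Hall => /andP [/eqP Hb Hw].
change (sgl b + sg w = Z.of_nat (size w).+1 * sgl a)%Z.
rewrite Hb IH // Nat2Z.inj_succ Z.mul_succ_l; lia.
Qed.

Lemma sd_eq (G : groupType) (Q : endo G) (p1 p2 : SD Q) :
  val p1.1 = val p2.1 -> p1.2 = p2.2 -> p1 = p2.
Proof.
case: p1 p2 => [u1 g1] [u2 g2] /= E1 E2; congr (_, _) => //; exact: val_inj.
Qed.
Lemma sdmul_1 (G : groupType) (Q : endo G) (p1 p2 : SD Q) :
  val (p1 * p2).1 = fmul (val p1.1) (RR Q p1.2 (val p2.1)).
Proof. by []. Qed.
Lemma sdmul_2 (G : groupType) (Q : endo G) (p1 p2 : SD Q) :
  (p1 * p2).2 = p1.2 * p2.2.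
Proof. by []. Qed.

Lemma noflip (T : finType) (e : rel T) (G : groupType) (iota : T -> G)
  (hG : is_RAAG e iota) (t0 : T) (m : G) :
  conjP m (iota t0) * iota t0 = iota t0 * conjP m (iota t0) ->
  conjP m (iota t0) = iota t0.
Proof.
set t := iota t0; set x := conjP m t => Hx.
pose f := fun u => if u == t0 then 1 else iota u.
have frel : forall u v, e u v -> f u * f v = f v * f u.
  move=> u v euv; rewrite /f; case: (u == t0); case: (v == t0);
  by rewrite ?mul1g ?mulg1 // hG.1.
have [q [qM qgen _]] := hG.2 G f frel.
have qq : forall y, q (q y) = q y.
  apply: (raag_uniq hG) => //.
  - by move=> y z; rewrite !qM.
  move=> u; rewrite qgen /f; case: ifP => Hu; first exact: morph1 qM.
  by rewrite qgen /f Hu.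
have q1 : q 1 = 1 := morph1 qM.
have qt : q t = 1 by rewrite /t qgen /f eqxx.
have qiota : forall u, u != t0 -> q (iota u) = iota u.
  by move=> u Hu; rewrite qgen /f (negbTE Hu).
pose Q := Endo qM.
pose a : letter G := (t, true).
pose F := fun u : T => if u == t0 then ((exist _ [:: a] isT : FW G), t) : SD Q
                       else ((exist _ [::] isT : FW G), iota u).
have cjt : forall u, iota u * t = t * iota u -> cj (iota u) t = t.
  move=> u eu; rewrite /cj eu; by rewrite mulgK.
have Frel : forall u v, e u v -> F u * F v = F v * F u.
  move=> u v euv; rewrite /F.
  case: (eqVneq u t0) => [Eu|Hu]; case: (eqVneq v t0) => [Ev|Hv] //.
  - subst u; apply: sd_eq; rewrite ?sdmul_1 ?sdmul_2 /=; last exact: hG.1.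
    by rewrite /RR /= qiota // /rl /= cjt // (esym (hG.1 _ _ euv)).
  - subst v; apply: sd_eq; rewrite ?sdmul_1 ?sdmul_2 /=; last exact: hG.1.
    by rewrite /RR /= qiota // /rl /= cjt // (hG.1 _ _ euv).
  - apply: sd_eq; rewrite ?sdmul_1 ?sdmul_2 /=; last exact: hG.1.
    by [].
have [phi [phiM phigen _]] := hG.2 (SD Q) F Frel.
have phi2 : forall g, (phi g).2 = g.
  apply: (raag_uniq hG (p1 := fun g => (phi g).2) (p2 := id)) => //.
    by move=> g h; rewrite /= phiM.
  by move=> u; rewrite /= phigen /F; case: ifP => // /eqP ->.
pose d g := val (phi g).1.
have dM : forall g h, d (g * h) = fmul (d g) (RR Q g (d h)).
  by move=> g h; rewrite /d phiM sdmul_1 phi2.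
have Phi : forall g, psi (d g) * q g = g.
  apply: (raag_uniq hG (p1 := fun g => psi (d g) * q g) (p2 := id)) => //.
    move=> g h /=; rewrite dM psi_fmul /RR psi_map /cj qM /=.
    by rewrite !mulgA mulgVK.
  move=> u; rewrite /d phigen /F; case: ifP => [/eqP Eu|Hu] /=.
    by rewrite Eu -/t qt /psi /= /psil /= !mulg1.
  by rewrite mul1g qiota ?Hu.
have d1 : d 1 = [::] by rewrite /d (morph1 phiM).
have sgM : forall g h, sg (d (g * h)) = (sg (d g) + sg (d h))%Z.
  by move=> g h; rewrite dM sg_fmul /RR sg_map.
have dt : d t = [:: a] by rewrite /d /t phigen /F eqxx.
have sgx : sg (d x) = 1%Z.
  have := sgM m m^-1; rewrite mulgV d1 /=.
  rewrite /x /conjP !sgM dt /=.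
  have -> : sgl a = 1%Z by [].
  lia.
have qx : q x = 1 by rewrite /x /conjP !qM qt mulg1 (morphV qM) mulgV.
have Hc : fmul (d x) [:: a] = act a (d x).
  have := congr1 d Hx; rewrite (dM x t) (dM t x) dt /RR /= qx qt map_cj1 /rl /= cj1.
  by [].
have := comm_single (valP (phi x).1) Hc; case/orP => Hall.
  have := sg_all Hall; rewrite sgx /sgl /= => Hs.
  change (1%Z = (Z.of_nat (size (d x)) * 1)%Z) in Hs.
  change (is_true (all (pred1 a) (d x))) in Hall.
  have Hsz : size (d x) = 1%N by lia.
  have Edx : d x = [:: a].
    move: Hall Hsz; case: (d x) => [|b [|c w]] //= /andP [/eqP -> _] _ //.
  by rewrite -(Phi x) Edx qx /psi /= /psil /= !mulg1.
have := sg_all Hall; rewrite sgx /sgl /= => Hs.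
change (1%Z = (Z.of_nat (size (d x)) * -1)%Z) in Hs; lia.
Qed.

From Stdlib Require Import FunctionalExtensionality PropExtensionality.

Section Main.
Variables (T : finType) (e : rel T) (G : groupType) (iota : T -> G).

Lemma conjPM (h k x : G) : conjP h (conjP k x) = conjP (h * k) x.
Proof. exact: cjM. Qed.
Lemma conjP1 (x : G) : conjP 1 x = x.
Proof. exact: cj1. Qed.
Lemma conjPK (h x : G) : conjP h^-1 (conjP h x) = x.
Proof. by rewrite conjPM mulVg conjP1. Qed.
Lemma conjPKV (h x : G) : conjP h (conjP h^-1 x) = x.
Proof. by rewrite conjPM mulgV conjP1. Qed.
Lemma conjP_inj (h : G) : injective (conjP h).
Proof. exact: cj_inj. Qed.
Lemma conjP_mul (h x y : G) : conjP h (x * y) = conjP h x * conjP h y.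
Proof. by rewrite /conjP !mulgA mulgVK. Qed.

Lemma V_conj (h x : G) : redExtVertex e iota x -> redExtVertex e iota (conjP h x).
Proof.
case=> g [t [Ht ->]]; exists (h * g), t; split => //; exact: conjPM.
Qed.

Lemma Adj_conj (h x y : G) : redExtAdj e iota x y ->
  redExtAdj e iota (conjP h x) (conjP h y).
Proof.
case=> Vx Vy Nxy Cxy; split; try exact: V_conj.
  by move=> E; apply: Nxy; rewrite -(conjPK h x) E conjPK.
by rewrite -!conjP_mul Cxy.
Qed.

Lemma Adj_sym (x y : G) : redExtAdj e iota x y -> redExtAdj e iota y x.
Proof. by case=> Vx Vy Nxy Cxy; split => // E; apply: Nxy. Qed.

Variable K : G -> Prop.
Hypothesis hK : is_subgroup K.

Lemma K1 : K 1. Proof. by case: hK. Qed.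
Lemma KM (x y : G) : K x -> K y -> K (x * y). Proof. by case: hK => _ H _; apply: H. Qed.
Lemma KV (x : G) : K x -> K x^-1. Proof. by case: hK => _ _ H; apply: H. Qed.

Lemma cR_refl (x : G) : conjRel K x x.
Proof. by exists 1; split; [exact: K1 | rewrite conjP1]. Qed.
Lemma cR_sym (x y : G) : conjRel K x y -> conjRel K y x.
Proof. by case=> k [Kk ->]; exists k^-1; split; [exact: KV | rewrite conjPK]. Qed.
Lemma cR_trans (x y z : G) : conjRel K x y -> conjRel K y z -> conjRel K x z.
Proof.
case=> k [Kk ->] [k' [Kk' ->]]; exists (k' * k); split; first exact: KM.
by rewrite conjPM.
Qed.

Lemma gamma_eq (x y : G) : conjRel K x y -> gammaK K x = gammaK K y.
Proof.
move=> H; apply: functional_extensionality => z; apply: propositional_extensionality.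
split => Hz; [exact: cR_trans (cR_sym H) Hz | exact: cR_trans H Hz].
Qed.

Lemma upair_sym (x y : G) : upair x y = upair y x.
Proof.
apply: functional_extensionality => z; apply: propositional_extensionality.
by rewrite /upair; split; case; auto.
Qed.

Lemma edgeOrbit_sym (x y : G) : edgeOrbit K x y = edgeOrbit K y x.
Proof.
apply: functional_extensionality => P; apply: propositional_extensionality.
by split; case=> k [Kk ->]; exists k; split => //; rewrite upair_sym.
Qed.

Lemma edgeOrbit_conj (h x y : G) : K h ->
  edgeOrbit K (conjP h x) (conjP h y) = edgeOrbit K x y.
Proof.
move=> Kh; apply: functional_extensionality => P; apply: propositional_extensionality.
split; case=> k [Kk ->].
  by exists (k * h); split; [exact: KM | rewrite !conjPM].
exists (k * h^-1); split; first by apply: KM => //; exact: KV.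
by rewrite !conjPM -!mulgA mulVg !mulg1.
Qed.
End Main.

Lemma noflip_vertex (T : finType) (e : rel T) (G : groupType) (iota : T -> G)
  (hG : is_RAAG e iota) (w h : G) :
  redExtVertex e iota w -> conjP h w * w = w * conjP h w -> conjP h w = w.
Proof.
case=> g [t [_ ->]] Hc.
have H : conjP (g^-1 * h * g) (iota t) = iota t.
  apply: (noflip hG).
  have E1 : conjP (g^-1 * h * g) (iota t) = conjP g^-1 (conjP h (conjP g (iota t))).
    by rewrite !conjPM.
  apply: (@conjP_inj G g); rewrite E1 (conjP_mul g (conjP g^-1 _)) (conjP_mul g (iota t)) conjPKV; exact: Hc.
rewrite -[in RHS]H !conjPM; congr conjP; by rewrite !mulgA mulgV mul1g.
Qed.

Unset Implicit Arguments.

Theorem mainTheorem10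
  (T : finType) (e : rel T) (hDelta : is_finite_tree e)
  (G : groupType) (iota : T -> G) (hG : is_RAAG e iota)
  (K : G -> Prop) (hK : is_subgroup K) (hKfin : finite_index K)
  (v : G -> Prop) (hv : PsiVertex e iota K v)
  (w : G) (hw : redExtVertex e iota w) (hwv : gammaK K w = v) :
  bijection_between (PsiAdj e iota K v)
    (classesOn (redExtAdj e iota w) (conjRel K)) /\
  bijection_between (PsiIncident e iota K v)
    (classesOn (redExtAdj e iota w) (conjRel (centK K w))).
Proof.
pose Adjw := redExtAdj e iota w.
have gw : forall x, gammaK K x = v -> conjRel K w x.
  move=> x Hx; have : gammaK K x x by exact: (cR_refl hK x).
  by rewrite Hx -hwv.
have adjnorm : forall O, PsiAdj e iota K v O -> exists y, Adjw y /\ O = gammaK K y.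
  move=> O [x [y [Hxy Hx <-]]].
  have [k [Kk Ex]] := gw x Hx.
  exists (conjP k^-1 y); split.
    by have := Adj_conj k^-1 Hxy; rewrite Ex conjPK.
  apply: gamma_eq => //; exists k^-1; split => //; exact: (KV hK).
split.
  exists (fun O => fun b => Adjw b /\ O b); split.
  - move=> O HO; have [y [Ay ->]] := adjnorm O HO.
    by exists y; split.
  - move=> O1 O2 H1 H2 Heq.
    have [y1 [Ay1 E1]] := adjnorm O1 H1; have [y2 [Ay2 E2]] := adjnorm O2 H2.
    subst O1 O2.
    have HP := congr1 (fun P => P y1) Heq; simpl in HP.
    have H : Adjw y1 /\ gammaK K y2 y1.
      by rewrite -HP; split => //; exact: (cR_refl hK _).
    case: H => _ H.
    by rewrite (gamma_eq hK H).
  - move=> C [a [Aa ->]]; exists (gammaK K a) => //.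
    by exists w, a; split.
pose Cw := centK K w.
have hC : is_subgroup Cw.
  split.
  - by split; [exact: K1 hK | rewrite mulg1 mul1g].
  - move=> x y [Kx Cx] [Ky Cy]; split; first exact: (KM hK).
    by rewrite -mulgA Cy !mulgA Cx.
  - move=> x [Kx Cx]; split; first exact: (KV hK).
    by apply: (mulgI x); rewrite !mulgA mulgV mul1g Cx mulgK.
have edge_inj : forall y y', Adjw y -> Adjw y' ->
    edgeOrbit K w y = edgeOrbit K w y' -> conjRel Cw y y'.
  move=> y y' Ay Ay' HE.
  have : edgeOrbit K w y' (upair w y').
    by exists 1; split; [exact: K1 hK | rewrite !conjP1].
  rewrite -HE => -[k [Kk Hup]].
  have Hw : upair (conjP k w) (conjP k y) w by rewrite -Hup; left.
  have Hy' : upair (conjP k w) (conjP k y) y' by rewrite -Hup; right.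
  case: Hw => Hw.
    have Ck : Cw k.
      split => //; apply: (mulIg k^-1).
      by rewrite -!mulgA mulgV mulg1 {2}Hw /conjP !mulgA.
    case: Hy' => Hy'.
      by case: Ay' => _ _ N _; exfalso; apply: N; rewrite Hy' -Hw.
    by exists k; split.
  exfalso.
  have Ey : y = conjP k^-1 w by rewrite Hw conjPK.
  case: Ay => _ _ N Cm; apply: N.
  rewrite Ey (noflip_vertex hG hw) //; by rewrite -Ey.
have f2E : forall y0, Adjw y0 ->
    (fun b => Adjw b /\ exists y, [/\ Adjw y, edgeOrbit K w y0 = edgeOrbit K w y
       & conjRel Cw y b]) = (fun b => Adjw b /\ conjRel Cw y0 b).
  move=> y0 Ay0; apply: functional_extensionality => b.
  apply: propositional_extensionality; split.
    case=> Ab [y [Ay HE Hyb]]; split => //.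
    exact: (cR_trans hC (edge_inj _ _ Ay0 Ay HE) Hyb).
  by case=> Ab H; split => //; exists y0; split.
have incnorm : forall E, PsiIncident e iota K v E ->
    exists y, Adjw y /\ E = edgeOrbit K w y.
  move=> E [[x [y [Hxy ->]]] [P [[k [Kk ->]] [z [Hz Hzv]]]]].
  have [k' [Kk' Ew]] := gw z Hzv.
  have Kh : K (k'^-1 * k) by apply: (KM hK) => //; exact: (KV hK).
  case: Hz => Ez; rewrite Ez in Ew.
    have Ew' : w = conjP (k'^-1 * k) x by rewrite -conjPM Ew conjPK.
    exists (conjP (k'^-1 * k) y); split.
      by have := Adj_conj (k'^-1 * k) Hxy; rewrite -Ew'.
    by rewrite Ew' edgeOrbit_conj.
  have Ew' : w = conjP (k'^-1 * k) y by rewrite -conjPM Ew conjPK.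
  exists (conjP (k'^-1 * k) x); split.
    by have := Adj_conj (k'^-1 * k) (Adj_sym Hxy); rewrite -Ew'.
  by rewrite Ew' edgeOrbit_sym edgeOrbit_conj.
exists (fun E => fun b => Adjw b /\ exists y, [/\ Adjw y, E = edgeOrbit K w y
       & conjRel Cw y b]); split.
- move=> E HE; have [y [Ay ->]] := incnorm E HE.
  by rewrite f2E //; exists y; split.
- move=> E1 E2 H1 H2 Heq.
  have [y1 [Ay1 E1d]] := incnorm E1 H1; have [y2 [Ay2 E2d]] := incnorm E2 H2.
  subst E1 E2; rewrite !f2E // in Heq.
  have HP := congr1 (fun P => P y2) Heq; simpl in HP.
  have H : Adjw y2 /\ conjRel Cw y1 y2.
    by rewrite HP; split => //; exact: (cR_refl hC _).
  case: H => _ [c [[Kc Cc] ->]].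
  have Ew : conjP c w = w by rewrite /conjP Cc mulgK.
  by rewrite -{2}Ew edgeOrbit_conj.
- move=> C [a [Aa ->]]; exists (edgeOrbit K w a); last by rewrite f2E.
  split; first by exists w, a; split.
  exists (upair w a); split.
    by exists 1; split; [exact: K1 hK | rewrite !conjP1].
  by exists w; split => //; left.
Qed.
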